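(* Let $n=T+1-t$. (i) The value $\tilde{V}_n^2(p_t,\nu_t)$ of the $n$-stage type 2 dual game $\tilde{\Gamma}_n^2(p_t,\nu_t)$ satisfies \[ \tilde{V}_n^2(p_t,\nu_t)=\max_{x\in X,\,u\in U,\,u_{:,0}\in\mathbb{R}^{|L|},\,\tilde{u}\in\mathbb{R}}\ \tilde{u} \] subject to \[ u_{:,0}+\nu_t\geq \tilde{u}\mathbf{1}, \] \[ \sum_{k\in K}{M^{kl}}^Tx_{k,h_1^A,h_1^B}+{u_{l,h_1^A,h_1^B}}^T\mathbf{1} \geq u_{l,0} \mathbf{1},\quad \forall l\in L, \] \[ \sum_{k\in K}{M^{kl}}^Tx_{k,h_{s+1}^A,h_{s+1}^B}+{u_{l,h_{s+1}^A,h_{s+1}^B}}^T\mathbf{1} \geq u_{l,h_{s}^A,h_{s}^B}^{a_{s},b_{s}}\mathbf{1},\quad \forall s=1,\ldots,n-1,\ l\in L,\ h_s^A\in H_s^A,\ h_s^B\in H_s^B, \] where $h_{s+1}^A=(h_s^A,a_s)$, $h_{s+1}^B=(h_s^B,b_s)$ (concatenation), $u_{l,h_n^A,h_n^B}$ is the zero matrix for all $l\in L$, $X$ is the set of player 1's realization plans (vectors satisfying $\mathbf{1}^T x_{k,h_s^A,h_s^B}=x_{k,h_{s-1}^A,h_{s-1}^B}^{a_{s-1}}$ and $x_{k,h_s^A,h_s^B}\geq\mathbf{0}$ for all $s,k,h_s^A,h_s^B$) with $x_{k,h_0^A,h_0^B}^{a_0}=p^k_t$, and $U$ is a real space of appropriate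 dimension. Player 1's security strategy at stage $t$ in the type 2 dual game is \[ \tilde{\sigma}^{*}_t(k,p_t,\nu_t)=\frac{x_{k,h_1^A,h_1^B}^{*}}{p^k_t}, \] where $x^*$ is an optimal solution of this LP. (ii) Similarly, for the type 1 dual game $\tilde{\Gamma}_T^1(\mu,q)$, with $\mu_t$ the regret on player 1's type and $q_t$ the belief on player 2's type at stage $t$, the value $\tilde{V}_n^1(\mu_t,q_t)$ of the $n$-stage type 1 dual game $\tilde{\Gamma}_n^1(\mu_t,q_t)$ satisfies \[ \tilde{V}_n^1(\mu_t,q_t)=\min_{y\in Y,\,w\in W,\,w_{:,0}\in\mathbb{R}^{|K|},\,\tilde{w}\in\mathbb{R}}\ \tilde{w} \] subject to \[ w_{:,0}+\mu_t \leq \tilde{w}\mathbf{1}, \] \[ \sum_{l\in L} M^{kl} y_{l,h_1^A,h_1^B}+w_{k,h_1^A,h_1^B}\mathbf{1} \leq w_{k,0}\mathbf{1},\quad\forall k\in K, \] \[ \sum_{l\in L} M^{kl} y_{l,h_{s+1}^A,h_{s+1}^B}+w_{k,h_{s+1}^A,h_{s+1}^B}\mathbf{1} \leq w_{k,h_{s}^A,h_{s}^B}^{a_{s},b_{s}}\mathbf{1},\quad\forall s=1,\ldots,n-1,\ k\in K,\ h_s^A\in H_s^A,\ h_s^B\in H_s^B, \] where $w_{k,h_n^A,h_n^B}$ is the zero matrix for all $k\in K$, $Y$ is the set of player 2's realization plans (vectors satisfying $\mathbf{1}^T y_{l,h_s^A,h_s^B}=y_{l,h_{s-1}^A,h_{s-1}^B}^{b_{s-1}}$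 and $y_{l,h_s^A,h_s^B}\geq\mathbf{0}$) with $y_{l,h_0^A,h_0^B}^{b_0}=q^l_t$, and $W$ is a real space of appropriate dimension. Player 2's security strategy at stage $t$ in the type 1 dual game is \[ \tilde{\tau}^*_t(l,\mu_t,q_t)=\frac{y_{l,h_1^A,h_1^B}^*}{q^l_t}. \]
   Context: A two-player zero-sum $T$-stage repeated Bayesian game is given by finite type sets $K$ (player 1, maximizer) and $L$ (player 2, minimizer), finite action sets $A,B$, payoff matrices $M^{kl}\in\mathbb{R}^{|A|\times|B|}$ with entries $M^{kl}_{a,b}=M(k,l,a,b)$, and initial type distributions $p\in\Delta(K)$, $q\in\Delta(L)$; types are fixed, actions are announced publicly each stage, and the payoff is $\mathbb{E}\sum_{t=1}^T M(k,l,a_t,b_t)$. History action sequences are $h_s^A\in H_s^A=A^{s-1}$, $h_s^B\in H_s^B=B^{s-1}$. A realization plan of player 1 is $x_{k,h_s^A,h_s^B}^{a_s}=p^k\prod_{r=1}^s\sigma_r^{a_r}(k,h_r^A,h_r^B)$ (vector $x_{k,h_s^A,h_s^B}\in\mathbb{R}^{|A|}$), and of player 2 is $y_{l,h_s^A,h_s^B}^{b_s}=q^l\prod_{r=1}^s\tau_r^{b_r}(l,h_r^A,h_r^B)$; the variables $u_{l,h_s^A,h_s^B}$, $w_{k,h_s^A,h_s^B}$ are $|A|\times|B|$ matrices and $u_{l,0}$, $w_{k,0}$ scalars. In the type 2 dual game $\tilde{\Gamma}_T^2(p,\nu)$ with $\nu\in\mathbb{R}^{|L|}$, player 2 chooses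 his own type $l$ (by a distribution $q$) without informing player 1, player 1's type is drawn from $p$, and player 1's payoff is $\mathbb{E}(\nu^l+\sum_{t=1}^T M(k,l,a_t,b_t))$. In the type 1 dual game $\tilde{\Gamma}_T^1(\mu,q)$ with $\mu\in\mathbb{R}^{|K|}$, player 1 chooses his own type $k$ himself, player 2's type is drawn from $q$, and the payoff is $\mathbb{E}(\mu^k+\sum_{t=1}^T M(k,l,a_t,b_t))$. In the type 2 dual game, $p_t$ is the belief on player 1's type ($p_t^k=P(k\mid l,h_t^A,h_t^B)$, updated by Bayes' rule with $p_1=p$) and $\nu_t$ is the regret on player 2's type ($\nu_{t+1}^l=\nu_t^l+\sum_{k}p_{t+1}^kM^{kl}_{a_t,b_t}$, $\nu_1=\nu$); analogously in the type 1 dual game, $q_t$ is the belief on player 2's type and $\mu_{t+1}^k=\mu_t^k+\sum_l q_{t+1}^lM^{kl}_{a_t,b_t}$, $\mu_1=\mu$. *)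

(* Defs.v *)
From HB Require Import structures.
From mathcomp Require Import all_boot all_order all_algebra.
From mathcomp Require Import reals.
Set Implicit Arguments. Unset Strict Implicit. Unset Printing Implicit Defensive.
Import Order.TTheory GRing.Theory Num.Theory.
Local Open Scope ring_scope.

(* Types K (player 1), L (player 2), actions A, B are finTypes;
   payoff M k l a b = M^{kl}_{a,b}.  A public history h_s = (h_s^A, h_s^B) at
   stage s is a pair of sequences of length s-1 (appended on the right with
   [rcons]).  Strategies, realization plans and LP variables are total
   functions on all pairs of sequences; only the relevant histories
   (equal lengths, length < n) are constrained / matter. *)

Definition is_distr (R : realType) (T : finType) (f : T -> R) : Prop :=
  (forall i, 0 <= f i) /\ \sum_(i : T) f i = 1.

(* behavior strategies: sigma k hA hB a = sigma_s^a(k, h_s^A, h_s^B) *)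
Definition is_strat1 (R : realType) (K A B : finType)
  (sigma : K -> seq A -> seq B -> A -> R) : Prop :=
  forall k hA hB, is_distr (sigma k hA hB).
Definition is_strat2 (R : realType) (L A B : finType)
  (tau : L -> seq A -> seq B -> B -> R) : Prop :=
  forall l hA hB, is_distr (tau l hA hB).

Fixpoint contpay (R : realType) (K L A B : finType) (M : K -> L -> A -> B -> R)
  (sigma : K -> seq A -> seq B -> A -> R) (tau : L -> seq A -> seq B -> B -> R)
  (k : K) (l : L) (m : nat) (hA : seq A) (hB : seq B) : R :=
  match m with
  | 0 => 0
  | m'.+1 => \sum_(a : A) \sum_(b : B)
      sigma k hA hB a * tau l hA hB b *
      (M k l a b + contpay M sigma tau k l m' (rcons hA a) (rcons hB b))
  end.

(* payoff of the n-stage type 2 dual game  ~Gamma_n^2(p, nu):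
   player 2 picks q in Delta(L) and tau *)
Definition pay2 (R : realType) (K L A B : finType) (M : K -> L -> A -> B -> R)
  (n : nat) (p : K -> R) (nu : L -> R)
  (sigma : K -> seq A -> seq B -> A -> R)
  (q : L -> R) (tau : L -> seq A -> seq B -> B -> R) : R :=
  \sum_(k : K) \sum_(l : L)
     p k * q l * (nu l + contpay M sigma tau k l n [::] [::]).

(* payoff of the n-stage type 1 dual game ~Gamma_n^1(mu, q):
   player 1 picks p in Delta(K) and sigma *)
Definition pay1 (R : realType) (K L A B : finType) (M : K -> L -> A -> B -> R)
  (n : nat) (mu : K -> R) (q : L -> R)
  (p : K -> R) (sigma : K -> seq A -> seq B -> A -> R)
  (tau : L -> seq A -> seq B -> B -> R) : R :=
  \sum_(k : K) \sum_(l : L)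
     p k * q l * (mu k + contpay M sigma tau k l n [::] [::]).

Definition is_value2 (R : realType) (K L A B : finType)
  (M : K -> L -> A -> B -> R) (n : nat) (p : K -> R) (nu : L -> R) (v : R) :=
  (exists sigma, is_strat1 sigma /\
     forall q tau, is_distr q -> is_strat2 tau -> v <= pay2 M n p nu sigma q tau) /\
  (exists q tau, is_distr q /\ is_strat2 tau /\
     forall sigma, is_strat1 sigma -> pay2 M n p nu sigma q tau <= v).

Definition is_value1 (R : realType) (K L A B : finType)
  (M : K -> L -> A -> B -> R) (n : nat) (mu : K -> R) (q : L -> R) (v : R) :=
  (exists tau, is_strat2 tau /\
     forall p sigma, is_distr p -> is_strat1 sigma -> pay1 M n mu q p sigma tau <= v) /\
  (exists p sigma, is_distr p /\ is_strat1 sigma /\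
     forall tau, is_strat2 tau -> v <= pay1 M n mu q p sigma tau).

Definition security1 (R : realType) (K L A B : finType)
  (M : K -> L -> A -> B -> R) (n : nat) (p : K -> R) (nu : L -> R)
  (sigma : K -> seq A -> seq B -> A -> R) : Prop :=
  is_strat1 sigma /\
  forall v, is_value2 M n p nu v ->
    forall q tau, is_distr q -> is_strat2 tau -> v <= pay2 M n p nu sigma q tau.

Definition security2 (R : realType) (K L A B : finType)
  (M : K -> L -> A -> B -> R) (n : nat) (mu : K -> R) (q : L -> R)
  (tau : L -> seq A -> seq B -> B -> R) : Prop :=
  is_strat2 tau /\
  forall v, is_value1 M n mu q v ->
    forall p sigma, is_distr p -> is_strat1 sigma -> pay1 M n mu q p sigma tau <= v.

(* X: realization plans of player 1, x k hA hB a = x^a_{k,h_s^A,h_s^B},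
   with x^{a_0}_{k,h_0} = p^k *)
Definition realization_plan1 (R : realType) (K A B : finType) (n : nat)
  (p : K -> R) (x : K -> seq A -> seq B -> A -> R) : Prop :=
  (forall k, \sum_(a : A) x k [::] [::] a = p k) /\
  (forall k (hA : seq A) (hB : seq B) a b, size hA = size hB -> ((size hA).+2 <= n)%N ->
     \sum_(a' : A) x k (rcons hA a) (rcons hB b) a' = x k hA hB a) /\
  (forall k (hA : seq A) (hB : seq B) a, size hA = size hB -> (size hA < n)%N ->
     0 <= x k hA hB a).

Definition realization_plan2 (R : realType) (L A B : finType) (n : nat)
  (q : L -> R) (y : L -> seq A -> seq B -> B -> R) : Prop :=
  (forall l, \sum_(b : B) y l [::] [::] b = q l) /\
  (forall l (hA : seq A) (hB : seq B) a b, size hA = size hB -> ((size hA).+2 <= n)%N ->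
     \sum_(b' : B) y l (rcons hA a) (rcons hB b) b' = y l hA hB b) /\
  (forall l (hA : seq A) (hB : seq B) b, size hA = size hB -> (size hA < n)%N ->
     0 <= y l hA hB b).

(* feasibility for the LP of part (i); u l hA hB a b = u^{a,b}_{l,hA,hB},
   u0 l = u_{l,0}, ut = tilde u *)
Definition LP2_feasible (R : realType) (K L A B : finType)
  (M : K -> L -> A -> B -> R) (n : nat) (p : K -> R) (nu : L -> R)
  (x : K -> seq A -> seq B -> A -> R) (u : L -> seq A -> seq B -> A -> B -> R)
  (u0 : L -> R) (ut : R) : Prop :=
  realization_plan1 n p x /\
  (forall l, ut <= u0 l + nu l) /\
  (forall l b, u0 l <=
     \sum_(k : K) \sum_(a : A) M k l a b * x k [::] [::] a
     + \sum_(a : A) u l [::] [::] a b) /\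
  (forall l (hA : seq A) (hB : seq B) a b b', size hA = size hB ->
     ((size hA).+2 <= n)%N ->
     u l hA hB a b <=
       \sum_(k : K) \sum_(a' : A) M k l a' b' * x k (rcons hA a) (rcons hB b) a'
       + \sum_(a' : A) u l (rcons hA a) (rcons hB b) a' b') /\
  (forall l (hA : seq A) (hB : seq B) a b, size hA = size hB ->
     (size hA).+1 = n -> u l hA hB a b = 0).

Definition is_LPmax2 (R : realType) (K L A B : finType)
  (M : K -> L -> A -> B -> R) (n : nat) (p : K -> R) (nu : L -> R) (v : R) :=
  (exists x u u0, LP2_feasible M n p nu x u u0 v) /\
  (forall x u u0 ut, LP2_feasible M n p nu x u u0 ut -> ut <= v).

(* feasibility for the LP of part (ii); w k hA hB a b = w^{a,b}_{k,hA,hB} *)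
Definition LP1_feasible (R : realType) (K L A B : finType)
  (M : K -> L -> A -> B -> R) (n : nat) (mu : K -> R) (q : L -> R)
  (y : L -> seq A -> seq B -> B -> R) (w : K -> seq A -> seq B -> A -> B -> R)
  (w0 : K -> R) (wt : R) : Prop :=
  realization_plan2 n q y /\
  (forall k, w0 k + mu k <= wt) /\
  (forall k a,
     \sum_(l : L) \sum_(b : B) M k l a b * y l [::] [::] b
     + \sum_(b : B) w k [::] [::] a b <= w0 k) /\
  (forall k (hA : seq A) (hB : seq B) a b a', size hA = size hB ->
     ((size hA).+2 <= n)%N ->
     \sum_(l : L) \sum_(b' : B) M k l a' b' * y l (rcons hA a) (rcons hB b) b'
     + \sum_(b' : B) w k (rcons hA a) (rcons hB b) a' b' <= w k hA hB a b) /\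
  (forall k (hA : seq A) (hB : seq B) a b, size hA = size hB ->
     (size hA).+1 = n -> w k hA hB a b = 0).

Definition is_LPmin1 (R : realType) (K L A B : finType)
  (M : K -> L -> A -> B -> R) (n : nat) (mu : K -> R) (q : L -> R) (v : R) :=
  (exists y w w0, LP1_feasible M n mu q y w w0 v) /\
  (forall y w w0 wt, LP1_feasible M n mu q y w w0 wt -> v <= wt).

(* Main.v *)
Require Import Defs.
From HB Require Import structures.
From mathcomp Require Import all_boot all_order all_algebra.
From mathcomp Require Import reals classical_sets.
From mathcomp Require Import zify ring lra.
Import Order.TTheory GRing.Theory Num.Theory.
Set Implicit Arguments. Unset Strict Implicit. Unset Printing Implicit Defensive.
Local Open Scope ring_scope.

Lemma sum_ind (R : pzRingType) (I : finType) (q : I) (F : I -> R) :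
  \sum_i (i == q)%:R * F i = F q.
Proof.
rewrite (bigD1 q) //= eqxx mul1r big1 ?addr0 // => i /negbTE ->; by rewrite mul0r.
Qed.

Lemma choose_t (R : realType) (I : finType) (a s : I -> R) :
  (forall i, 0 <= a i -> s i < 0) ->
  (forall p q, 0 < a p -> a q < 0 -> a p * s q - a q * s p < 0) ->
  exists t, 0 <= t /\ forall i, a i * t + s i < 0.
Proof.
move=> h1 h2.
pose L := \big[Num.max/0]_(q | a q < 0) (s q / - a q).
have L0 : 0 <= L.
  rewrite /L; elim/big_rec: _ => // i x _ hx; by rewrite le_max hx orbT.
have Lq : forall q, a q < 0 -> s q / - a q <= L.
  move=> q hq; rewrite /L (bigD1 q) //= le_max lexx //.
have Lp : forall p, 0 < a p -> L < - s p / a p.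
  move=> p hp; rewrite /L; apply: (big_ind (fun m => m < - s p / a p)).
  - apply: divr_gt0 => //; rewrite oppr_gt0; apply: h1; exact: ltW.
  - by move=> x y hx hy; rewrite gt_max hx hy.
  - move=> q hq; rewrite ltr_pdivlMr // mulrAC ltr_pdivrMr ?oppr_gt0 //.
    have := h2 p q hp hq; nra.
pose d := \big[Num.min/1]_(p | 0 < a p) (- s p / a p - L).
have d0 : 0 < d.
  rewrite /d; apply: (big_ind (fun m => 0 < m)) => //.
  - by move=> x y hx hy; rewrite lt_min hx hy.
  - by move=> j hj; rewrite subr_gt0 Lp.
have dp : forall p, 0 < a p -> d <= - s p / a p - L.
  move=> p hp; rewrite /d (bigD1 p) //= ge_min lexx //.
exists (L + d / 2); split; first by lra.
move=> i; case: (ltgtP (a i) 0) => hi.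
- have := Lq i hi; rewrite ler_pdivrMr ?oppr_gt0 //; nra.
- have := dp i hi; have := h1 i (ltW hi).
  rewrite -(ltr_pM2r hi).
  move=> _ hd.
  have : L + d / 2 < - s i / a i by lra.
  rewrite ltr_pdivlMr //; nra.
- rewrite hi mul0r add0r; apply: h1; by rewrite hi.
Qed.

Definition vvalid (R : realType) (I J : finType) (A : I -> J -> R) (j0 : J)
  (r : I + (I * I)) : bool :=
  match r with
  | inl i => 0 <= A i j0
  | inr pq => (0 < A pq.1 j0) && (A pq.2 j0 < 0)
  end.

Definition vcoef (R : realType) (I J : finType) (A : I -> J -> R) (j0 : J)
  (r : I + (I * I)) (i : I) : R :=
  match r with
  | inl i' => (i == i')%:R
  | inr pq => (i == pq.2)%:R * A pq.1 j0 - (i == pq.1)%:R * A pq.2 j0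
  end.

Lemma vcoef_ge0 (R : realType) (I J : finType) (A : I -> J -> R) (j0 : J) r i :
  vvalid A j0 r -> 0 <= vcoef A j0 r i.
Proof.
case: r => [i'|[p q]] /=; first by rewrite ler0n.
case/andP=> hp hq; apply: addr_ge0.
  by apply: mulr_ge0; [rewrite ler0n | exact: ltW].
rewrite -mulrN; apply: mulr_ge0; first by rewrite ler0n.
by rewrite oppr_ge0 ltW.
Qed.

Lemma vcoef_sum (R : realType) (I J : finType) (A : I -> J -> R) (j0 : J) r (F : I -> R) :
  \sum_i vcoef A j0 r i * F i =
  match r with inl i' => F i' | inr pq => A pq.1 j0 * F pq.2 - A pq.2 j0 * F pq.1 end.
Proof.
case: r => [i'|[p q]] /=; first exact: sum_ind.
under eq_bigr do rewrite mulrBl -!mulrA.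
by rewrite sumrB !sum_ind.
Qed.

Lemma vcoef_sum_pos (R : realType) (I J : finType) (A : I -> J -> R) (j0 : J) r :
  vvalid A j0 r -> 0 < \sum_i vcoef A j0 r i.
Proof.
move=> hv; have := vcoef_sum A j0 r (fun _ => 1).
under eq_bigr do rewrite mulr1.
move=> ->; case: r hv => [i'|[p q]] /=; first by rewrite ltr01.
case/andP=> hp hq; rewrite !mulr1; lra.
Qed.

Lemma ville (R : realType) (J : finType) (n : nat) :
  forall (S : {set J}), #|S| = n -> forall (I : finType) (A : I -> J -> R),
  (exists x : I -> R, (forall i, 0 <= x i) /\ 0 < \sum_i x i /\
      forall j, j \in S -> 0 <= \sum_i x i * A i j)
  \/ (exists y : J -> R, (forall j, 0 <= y j) /\
      forall i, \sum_(j in S) A i j * y j < 0).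
Proof.
elim: n => [|n IH] S hS I A.
  have -> : S = finset.set0 by apply/eqP; rewrite -cards_eq0 hS.
  case: (pickP (fun _ : I => true)) => [i0 _|hI].
    left; exists (fun i => (i == i0)%:R); split; first by move=> i; rewrite ler0n.
    split; last by move=> j; rewrite finset.in_set0.
    have := sum_ind i0 (fun _ => (1 : R)); under eq_bigr do rewrite mulr1.
    by move=> ->; rewrite ltr01.
  right; exists (fun _ => 0); split => // i; by have := hI i.
have [j0 hj0] : exists j0, j0 \in S.
  apply/finset.set0Pn; by rewrite -cards_eq0 hS.
have hS' : #|S :\ j0| = n.
  by move: hS; rewrite (cardsD1 j0) hj0 add1n => -[].
pose A' := fun (r : {r : I + (I * I) | vvalid A j0 r}) (j : J) => \sum_i vcoef A j0 (val r) i * A i j.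
case: (IH _ hS' {r : I + (I * I) | vvalid A j0 r} A') => [[z [z0 [zpos zS]]]|[w [w0 wS]]].
- left; exists (fun i => \sum_(r : {r : I + (I * I) | vvalid A j0 r}) z r * vcoef A j0 (val r) i).
  have exch : forall F : I -> R, \sum_i (\sum_(r : {r : I + (I * I) | vvalid A j0 r}) z r * vcoef A j0 (val r) i) * F i
      = \sum_(r : {r : I + (I * I) | vvalid A j0 r}) z r * \sum_i vcoef A j0 (val r) i * F i.
    move=> F; under eq_bigr do rewrite mulr_suml.
    rewrite exchange_big /=; apply: eq_bigr => r _; rewrite mulr_sumr.
    by apply: eq_bigr => i _; rewrite mulrA.
  split.
    move=> i; apply: sumr_ge0 => r _; apply: mulr_ge0 => //.
    apply: vcoef_ge0; exact: valP.
  split.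
    have := exch (fun _ => 1); under eq_bigr do rewrite mulr1.
    under [X in _ = X -> _]eq_bigr do under eq_bigr do rewrite mulr1.
    move=> ->; rewrite lt_neqAle; apply/andP; split; last first.
      apply: sumr_ge0 => r _; apply: mulr_ge0 => //; apply: ltW; apply: vcoef_sum_pos; exact: valP.
    apply/negP => /eqP /esym heq.
    have h := psumr_eq0P (fun r _ => mulr_ge0 (z0 r) (ltW (vcoef_sum_pos (valP r)))) heq.
    have : \sum_(r : {r : I + (I * I) | vvalid A j0 r}) z r = 0.
      apply: big1 => r _.
      have := h r isT; have hp := vcoef_sum_pos (valP r).
      by move/eqP; rewrite mulf_eq0 (gt_eqF hp) orbF => /eqP.
    by move=> hz; move: zpos; rewrite hz ltxx.
  move=> j hj; rewrite exch.
  case: (eqVneq j j0) => [->|hjj].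
    apply: sumr_ge0 => r _; apply: mulr_ge0 => //.
    rewrite vcoef_sum; case: r => -[i'|[p q]] /= hv //.
    by rewrite mulrC subrr.
  apply: zS; by rewrite in_setD1 hjj hj.
- pose s := fun i => \sum_(j in S :\ j0) A i j * w j.
  have key : forall r : {r : I + (I * I) | vvalid A j0 r}, \sum_(j in S :\ j0) A' r j * w j =
      \sum_i vcoef A j0 (val r) i * s i.
    move=> r; rewrite /A' /s.
    under eq_bigr do rewrite mulr_suml.
    rewrite exchange_big /=; apply: eq_bigr => i _; rewrite mulr_sumr.
    by apply: eq_bigr => j _; rewrite mulrA.
  have [t [t0 ht]] : exists t, 0 <= t /\ forall i, A i j0 * t + s i < 0.
    apply: choose_t.
      move=> i hi; have := wS (exist _ (inl i) hi).
      by rewrite key vcoef_sum.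
    move=> p q hp hq.
    have hv : vvalid A j0 (inr (p, q)) by rewrite /= hp hq.
    have := wS (exist _ (inr (p, q)) hv).
    by rewrite key vcoef_sum.
  right; exists (fun j => if j == j0 then t else w j); split.
    by move=> j; case: ifP.
  move=> i; rewrite (big_setD1 j0 hj0) /= eqxx.
  have -> : \sum_(j in S :\ j0) A i j * (if j == j0 then t else w j) = s i.
    apply: eq_bigr => j; rewrite in_setD1 => /andP [/negbTE -> _] //.
  exact: ht.
Qed.

Lemma le_sum1 (R : realType) (I : finType) (F : I -> R) i :
  (forall j, 0 <= F j) -> F i <= \sum_j F j.
Proof. by move=> h; rewrite (bigD1 i) //= lerDl sumr_ge0. Qed.

Lemma sum_divl (R : realType) (I : finType) (x F : I -> R) c :
  \sum_i (x i / c) * F i = (\sum_i x i * F i) / c.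
Proof. by rewrite mulr_suml; apply: eq_bigr => i _; rewrite mulrAC. Qed.

Lemma sum_divr (R : realType) (I : finType) (x F : I -> R) c :
  \sum_i F i * (x i / c) = (\sum_i F i * x i) / c.
Proof. by rewrite mulr_suml; apply: eq_bigr => i _; rewrite mulrA. Qed.

Lemma normalize_distr (R : realType) (I : finType) (x : I -> R) :
  (forall i, 0 <= x i) -> 0 < \sum_i x i -> is_distr (fun i => x i / \sum_j x j).
Proof.
move=> h0 hp; split.
  by move=> i; apply: divr_ge0 => //; apply: ltW.
by rewrite -mulr_suml divff // gt_eqF.
Qed.

Lemma sum_setT (R : realType) (J : finType) (F : J -> R) :
  \sum_(j in [set: J]) F j = \sum_j F j.
Proof. by apply: eq_bigl => j; rewrite finset.in_setT. Qed.

Lemma sum_pos_of_neg (R : realType) (I J : finType) (y : J -> R) (F : I -> J -> R) (i0 : I) :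
  (forall j, 0 <= y j) -> (forall i, \sum_(j in [set: J]) F i j * y j < 0) ->
  0 < \sum_j y j.
Proof.
move=> h0 h; rewrite lt_neqAle sumr_ge0 // andbT; apply/negP => /eqP /esym heq.
have hy := psumr_eq0P (fun j _ => h0 j) heq.
have := h i0; rewrite big1 ?ltxx // => j _; by rewrite hy // mulr0.
Qed.

Lemma minimax (R : realType) (I J : finType) (G : I -> J -> R) (i0 : I) (j0 : J) :
  exists v (x : I -> R) (y : J -> R), is_distr x /\ is_distr y /\
    (forall j, v <= \sum_i x i * G i j) /\ (forall i, \sum_j G i j * y j <= v).
Proof.
pose C := \sum_i \sum_j `|G i j|.
have GC : forall i j, `|G i j| <= C.
  move=> i j; apply: le_trans (le_sum1 _ _); last by move=> k; apply: sumr_ge0.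
  by apply: le_sum1.
pose E : set R := fun lam => exists x, is_distr x /\ forall j, lam <= \sum_i x i * G i j.
have Eub : forall lam, E lam -> lam <= C.
  move=> lam [x [[x0 x1] hx]]; apply: le_trans (hx j0) _.
  rewrite -[C]mul1r -x1 mulr_suml; apply: ler_sum => i _.
  apply: ler_wpM2l => //; apply: le_trans (GC i j0); exact: ler_norm.
have Ene : E (- C).
  exists (fun i => (i == i0)%:R); split.
    split; first by move=> i; rewrite ler0n.
    have := sum_ind i0 (fun _ => (1 : R)); under eq_bigr do rewrite mulr1. done.
  move=> j; rewrite sum_ind lerNl; apply: le_trans (GC i0 j); by rewrite -normrN ler_norm.
have Esup : has_sup E.
  split; first by exists (- C).
  by exists C => lam /Eub.
pose v := sup E.
have hv : forall lam, E lam -> lam <= v by move=> lam hl; exact: sup_upper_bound.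
have hv2 : forall m, (forall lam, E lam -> lam <= m) -> v <= m.
  move=> m hm; apply: ge_sup; first by exists (- C). exact: hm.
have P1 : exists x, is_distr x /\ forall j, v <= \sum_i x i * G i j.
  case: (ville (erefl #|[set: J]|) (fun i j => G i j - v)) => [[x [x0 [xp xS]]]|[y [y0 yS]]].
    exists (fun i => x i / \sum_j x j); split; first exact: normalize_distr.
    move=> j; rewrite sum_divl ler_pdivlMr //.
    have := xS j (finset.in_setT j).
    under eq_bigr do rewrite mulrBr.
    by rewrite sumrB -mulr_suml subr_ge0 mulrC.
  have yp := sum_pos_of_neg i0 y0 yS.
  pose g := fun i => \sum_j G i j * (y j / \sum_k y k).
  have gv : forall i, g i < v.
    move=> i; rewrite /g sum_divr ltr_pdivrMr //.
    have := yS i; under eq_bigr do rewrite mulrBl.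
    rewrite sumrB subr_lt0 -mulr_sumr.
    by rewrite !sum_setT.
  pose mx := \big[Num.max/g i0]_i g i.
  have mxv : mx < v.
    by apply: (big_ind (fun m => m < v)) => // a b ha hb; rewrite gt_max ha hb.
  have gmx : forall i, g i <= mx.
    by move=> i; rewrite /mx (bigD1 i) //= le_max lexx.
  suff : v <= mx by rewrite leNgt mxv.
  apply: hv2 => lam [x [[x0 x1] hx]].
  have : lam <= \sum_j (y j / \sum_k y k) * \sum_i x i * G i j.
    rewrite -[lam]mul1r.
    have <- : \sum_j (y j / \sum_k y k) = 1.
      by rewrite -mulr_suml divff // gt_eqF.
    rewrite mulr_suml; apply: ler_sum => j _.
    apply: ler_wpM2l; [apply: divr_ge0 => //; exact: ltW | exact: hx].
  move/le_trans; apply.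
  have -> : \sum_j (y j / \sum_k y k) * \sum_i x i * G i j = \sum_i x i * g i.
    rewrite /g; under eq_bigr do rewrite mulr_sumr.
    rewrite exchange_big /=; apply: eq_bigr => i _; rewrite mulr_sumr.
    by apply: eq_bigr => j _; rewrite mulrCA [G i j * _]mulrC.
  rewrite -[mx]mul1r -x1 mulr_suml; apply: ler_sum => i _.
  by apply: ler_wpM2l.
have P2 : exists y, is_distr y /\ forall i, \sum_j G i j * y j <= v.
  case: (ville (erefl #|[set: I]|) (fun j i => v - G i j)) => [[y [y0 [yp yS]]]|[x [x0 xS]]].
    exists (fun j => y j / \sum_k y k); split; first exact: normalize_distr.
    move=> i; rewrite sum_divr ler_pdivrMr //.
    have := yS i (finset.in_setT i).
    under eq_bigr do rewrite mulrBr.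
    rewrite sumrB -mulr_suml subr_ge0 [_ * v]mulrC.
    by under [X in X <= _ -> _]eq_bigr do rewrite mulrC.
  have xp := sum_pos_of_neg j0 x0 xS.
  pose h := fun j => \sum_i (x i / \sum_k x k) * G i j.
  have hv' : forall j, v < h j.
    move=> j; rewrite /h sum_divl ltr_pdivlMr //.
    have := xS j; under eq_bigr do rewrite mulrBl.
    rewrite sumrB subr_lt0 -mulr_sumr.
    have -> : \sum_(i in [set: I]) G i j * x i = \sum_i x i * G i j.
      by apply: eq_big => i; rewrite ?finset.in_setT // mulrC.
    have -> : \sum_(i in [set: I]) x i = \sum_i x i by apply: eq_bigl => i; rewrite finset.in_setT.
    done.
  pose mn := \big[Num.min/h j0]_j h j.
  have mnv : v < mn.
    by apply: (big_ind (fun m => v < m)) => // a b ha hb; rewrite lt_min ha hb.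
  suff : mn <= v by rewrite leNgt mnv.
  apply: hv; exists (fun i => x i / \sum_k x k); split; first exact: normalize_distr.
  by move=> j; rewrite /mn (bigD1 j) //= ge_min lexx.
case: P1 => x [xd xv]; case: P2 => y [yd yv].
by exists v, x, y.
Qed.


Fixpoint LinF1 (R : realType) (K L A B : finType) (M : K -> L -> A -> B -> R)
  (x : K -> seq A -> seq B -> A -> R) (tau : L -> seq A -> seq B -> B -> R)
  (k : K) (l : L) (m : nat) (hA : seq A) (hB : seq B) : R :=
  match m with
  | 0 => 0
  | m'.+1 => \sum_(a : A) \sum_(b : B) tau l hA hB b *
      (x k hA hB a * M k l a b + LinF1 M x tau k l m' (rcons hA a) (rcons hB b))
  end.

Fixpoint LinF2 (R : realType) (K L A B : finType) (M : K -> L -> A -> B -> R)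
  (y : L -> seq A -> seq B -> B -> R) (sigma : K -> seq A -> seq B -> A -> R)
  (k : K) (l : L) (m : nat) (hA : seq A) (hB : seq B) : R :=
  match m with
  | 0 => 0
  | m'.+1 => \sum_(a : A) \sum_(b : B) sigma k hA hB a *
      (y l hA hB b * M k l a b + LinF2 M y sigma k l m' (rcons hA a) (rcons hB b))
  end.

Lemma GI1 (R : realType) (K L A B : finType) (M : K -> L -> A -> B -> R)
  (sigma : K -> seq A -> seq B -> A -> R) (tau : L -> seq A -> seq B -> B -> R)
  (X : K -> seq A -> seq B -> R) (x : K -> seq A -> seq B -> A -> R) (N : nat) k l :
  (forall hA hB a, size hA = size hB -> (size hA < N)%N ->
     X k hA hB * sigma k hA hB a = x k hA hB a) ->
  (forall hA hB a b, size hA = size hB -> ((size hA).+2 <= N)%N ->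
     X k (rcons hA a) (rcons hB b) = x k hA hB a) ->
  forall m hA hB, size hA = size hB -> (size hA + m <= N)%N ->
  X k hA hB * contpay M sigma tau k l m hA hB = LinF1 M x tau k l m hA hB.
Proof.
move=> H1 H2; elim=> [|m IH] hA hB hs hN /=; first by rewrite mulr0.
rewrite mulr_sumr; apply: eq_bigr => a _; rewrite mulr_sumr; apply: eq_bigr => b _.
have e1 : X k hA hB * sigma k hA hB a = x k hA hB a by apply: H1 => //; lia.
have e2 : x k hA hB a * contpay M sigma tau k l m (rcons hA a) (rcons hB b) =
          LinF1 M x tau k l m (rcons hA a) (rcons hB b).
  case: m IH hN => [|m] IH hN /=; first by rewrite mulr0.
  rewrite -(H2 hA hB a b hs); last by lia.
  apply: IH; rewrite !size_rcons ?hs //; lia.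
rewrite -e2 -e1; ring.
Qed.

Lemma GI2 (R : realType) (K L A B : finType) (M : K -> L -> A -> B -> R)
  (sigma : K -> seq A -> seq B -> A -> R) (tau : L -> seq A -> seq B -> B -> R)
  (Y : L -> seq A -> seq B -> R) (y : L -> seq A -> seq B -> B -> R) (N : nat) k l :
  (forall hA hB b, size hA = size hB -> (size hA < N)%N ->
     Y l hA hB * tau l hA hB b = y l hA hB b) ->
  (forall hA hB a b, size hA = size hB -> ((size hA).+2 <= N)%N ->
     Y l (rcons hA a) (rcons hB b) = y l hA hB b) ->
  forall m hA hB, size hA = size hB -> (size hA + m <= N)%N ->
  Y l hA hB * contpay M sigma tau k l m hA hB = LinF2 M y sigma k l m hA hB.
Proof.
move=> H1 H2; elim=> [|m IH] hA hB hs hN /=; first by rewrite mulr0.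
rewrite mulr_sumr; apply: eq_bigr => a _; rewrite mulr_sumr; apply: eq_bigr => b _.
have e1 : Y l hA hB * tau l hA hB b = y l hA hB b by apply: H1 => //; lia.
have e2 : y l hA hB b * contpay M sigma tau k l m (rcons hA a) (rcons hB b) =
          LinF2 M y sigma k l m (rcons hA a) (rcons hB b).
  case: m IH hN => [|m] IH hN /=; first by rewrite mulr0.
  rewrite -(H2 hA hB a b hs); last by lia.
  apply: IH; rewrite !size_rcons ?hs //; lia.
rewrite -e2 -e1; ring.
Qed.

Lemma LinF1_lin (R : realType) (K L A B : finType) (M : K -> L -> A -> B -> R)
  (I : finType) (c : I -> R) (xs : I -> K -> seq A -> seq B -> A -> R)
  (tau : L -> seq A -> seq B -> B -> R) k l m hA hB :
  LinF1 M (fun k hA hB a => \sum_i c i * xs i k hA hB a) tau k l m hA hB =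
  \sum_i c i * LinF1 M (xs i) tau k l m hA hB.
Proof.
elim: m hA hB => [|m IH] hA hB /=; first by rewrite big1 // => i _; rewrite mulr0.
under eq_bigr do under eq_bigr do rewrite IH mulr_suml -big_split /= mulr_sumr.
under eq_bigr do rewrite exchange_big /=.
rewrite exchange_big /=; apply: eq_bigr => i _; rewrite mulr_sumr.
apply: eq_bigr => a _; rewrite mulr_sumr.
apply: eq_bigr => b _; ring.
Qed.

Lemma LinF2_lin (R : realType) (K L A B : finType) (M : K -> L -> A -> B -> R)
  (I : finType) (c : I -> L -> R) (ys : I -> L -> seq A -> seq B -> B -> R)
  (sigma : K -> seq A -> seq B -> A -> R) k l m hA hB :
  LinF2 M (fun l hA hB b => \sum_i c i l * ys i l hA hB b) sigma k l m hA hB =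
  \sum_i c i l * LinF2 M (ys i) sigma k l m hA hB.
Proof.
elim: m hA hB => [|m IH] hA hB /=; first by rewrite big1 // => i _; rewrite mulr0.
under eq_bigr do under eq_bigr do rewrite IH mulr_suml -big_split /= mulr_sumr.
under eq_bigr do rewrite exchange_big /=.
rewrite exchange_big /=; apply: eq_bigr => i _; rewrite mulr_sumr.
apply: eq_bigr => a _; rewrite mulr_sumr.
apply: eq_bigr => b _; ring.
Qed.

Fixpoint rwf (R : realType) (A B : Type) (g : seq A -> seq B -> A -> B -> R) (w : R)
  (pA : seq A) (pB : seq B) (hA : seq A) (hB : seq B) : R :=
  match hA, hB with
  | a :: hA', b :: hB' => rwf g (w * g pA pB a b) (rcons pA a) (rcons pB b) hA' hB'
  | _, _ => w
  end.

Lemma rwf_rcons (R : realType) (A B : Type) (g : seq A -> seq B -> A -> B -> R) w pA pB hA hB a b :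
  size hA = size hB ->
  rwf g w pA pB (rcons hA a) (rcons hB b) = rwf g w pA pB hA hB * g (pA ++ hA) (pB ++ hB) a b.
Proof.
elim: hA hB w pA pB => [|a' hA IH] [|b' hB] // w pA pB /=.
  by rewrite !cats0.
move=> [] hs; rewrite IH //; by rewrite !cat_rcons.
Qed.

Lemma rwf_ge0 (R : realType) (A B : Type) (g : seq A -> seq B -> A -> B -> R) w pA pB hA hB :
  (forall pA pB a b, 0 <= g pA pB a b) -> 0 <= w -> 0 <= rwf g w pA pB hA hB.
Proof.
move=> hg; elim: hA hB w pA pB => [|a' hA IH] [|b' hB] // w pA pB hw /=.
apply: IH; exact: mulr_ge0.
Qed.

Definition rw1 (R : realType) (K A B : finType) (p : K -> R)
  (sigma : K -> seq A -> seq B -> A -> R) k hA hB : R :=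
  rwf (fun pA pB a _ => sigma k pA pB a) (p k) [::] [::] hA hB.
Definition rp1 (R : realType) (K A B : finType) (p : K -> R)
  (sigma : K -> seq A -> seq B -> A -> R) k hA hB a : R :=
  rw1 p sigma k hA hB * sigma k hA hB a.
Definition rw2 (R : realType) (L A B : finType)
  (tau : L -> seq A -> seq B -> B -> R) l hA hB : R :=
  rwf (fun pA pB _ b => tau l pA pB b) 1 [::] [::] hA hB.
Definition rp2 (R : realType) (L A B : finType)
  (tau : L -> seq A -> seq B -> B -> R) l hA hB b : R :=
  rw2 tau l hA hB * tau l hA hB b.

Lemma rw1_rcons (R : realType) (K A B : finType) (p : K -> R)
  (sigma : K -> seq A -> seq B -> A -> R) k hA hB a b : size hA = size hB ->
  rw1 p sigma k (rcons hA a) (rcons hB b) = rp1 p sigma k hA hB a.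
Proof. by move=> hs; rewrite /rw1 rwf_rcons. Qed.

Lemma rw2_rcons (R : realType) (L A B : finType)
  (tau : L -> seq A -> seq B -> B -> R) l hA hB a b : size hA = size hB ->
  rw2 tau l (rcons hA a) (rcons hB b) = rp2 tau l hA hB b.
Proof. by move=> hs; rewrite /rw2 rwf_rcons. Qed.

Lemma rp1_plan (R : realType) (K A B : finType) (p : K -> R)
  (sigma : K -> seq A -> seq B -> A -> R) n :
  is_distr p -> is_strat1 sigma -> realization_plan1 n p (rp1 p sigma).
Proof.
move=> [p0 p1] hs; have rge : forall k hA hB, 0 <= rw1 p sigma k hA hB.
  move=> k hA hB; apply: rwf_ge0 => // *; exact: (hs _ _ _).1.
split; [|split].
- move=> k; rewrite /rp1 -mulr_sumr (hs _ _ _).2 mulr1 //.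
- move=> k hA hB a b hsz _; rewrite /rp1 -mulr_sumr (hs _ _ _).2 mulr1 rw1_rcons //.
- move=> k hA hB a _ _; apply: mulr_ge0 => //; exact: (hs _ _ _).1.
Qed.

Lemma rp2_plan (R : realType) (L A B : finType) (l0 : L)
  (tau : L -> seq A -> seq B -> B -> R) n :
  is_strat2 tau ->
  realization_plan2 n (fun l => (l == l0)%:R) (fun l hA hB b => (l == l0)%:R * rp2 tau l hA hB b).
Proof.
move=> hs; have rge : forall l hA hB, 0 <= rw2 tau l hA hB.
  move=> l hA hB; apply: rwf_ge0 => // *; exact: (hs _ _ _).1.
split; [|split].
- by move=> l; rewrite -mulr_sumr /rp2 -mulr_sumr (hs _ _ _).2 mulr1 /rw2 /= mulr1.
- move=> l hA hB a b hsz _; rewrite -mulr_sumr /rp2 -mulr_sumr (hs _ _ _).2 mulr1 rw2_rcons //.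
- move=> l hA hB b _ _; apply: mulr_ge0; first by rewrite ler0n.
  apply: mulr_ge0 => //; exact: (hs _ _ _).1.
Qed.

Lemma rp1_comb (R : realType) (K A B : finType) (I : finType) (p : K -> R) n
  (c : I -> R) (xs : I -> K -> seq A -> seq B -> A -> R) :
  (forall i, realization_plan1 n p (xs i)) -> (forall i, 0 <= c i) -> \sum_i c i = 1 ->
  realization_plan1 n p (fun k hA hB a => \sum_i c i * xs i k hA hB a).
Proof.
move=> hx hc c1; split; [|split].
- move=> k; rewrite exchange_big /=.
  under eq_bigr do rewrite -mulr_sumr (hx _).1.
  by rewrite -mulr_suml c1 mul1r.
- move=> k hA hB a b hs hn; rewrite exchange_big /=; apply: eq_bigr => i _.
  by rewrite -mulr_sumr (hx i).2.1.
- move=> k hA hB a hs hn; apply: sumr_ge0 => i _; apply: mulr_ge0 => //.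
  exact: (hx i).2.2.
Qed.

Lemma rp2_comb (R : realType) (L A B : finType) (I : finType) n
  (c : I -> R) (qs : I -> L -> R) (ys : I -> L -> seq A -> seq B -> B -> R) :
  (forall i, realization_plan2 n (qs i) (ys i)) -> (forall i, 0 <= c i) ->
  realization_plan2 n (fun l => \sum_i c i * qs i l)
     (fun l hA hB b => \sum_i c i * ys i l hA hB b).
Proof.
move=> hy hc; split; [|split].
- move=> l; rewrite exchange_big /=; apply: eq_bigr => i _.
  by rewrite -mulr_sumr (hy _).1.
- move=> l hA hB a b hs hn; rewrite exchange_big /=; apply: eq_bigr => i _.
  by rewrite -mulr_sumr (hy i).2.1.
- move=> l hA hB b hs hn; apply: sumr_ge0 => i _; apply: mulr_ge0 => //.
  exact: (hy i).2.2.
Qed.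

Definition beh1 (R : realType) (K A B : finType) (n : nat) (a0 : A)
  (x : K -> seq A -> seq B -> A -> R) k hA hB : A -> R :=
  if [&& size hA == size hB, (size hA < n)%N & \sum_a' x k hA hB a' != 0]
  then (fun a => x k hA hB a / \sum_a' x k hA hB a') else (fun a => (a == a0)%:R).

Definition beh2 (R : realType) (L A B : finType) (n : nat) (b0 : B)
  (y : L -> seq A -> seq B -> B -> R) l hA hB : B -> R :=
  if [&& size hA == size hB, (size hA < n)%N & \sum_b' y l hA hB b' != 0]
  then (fun b => y l hA hB b / \sum_b' y l hA hB b') else (fun b => (b == b0)%:R).

Lemma ind_distr (R : realType) (A : finType) (a0 : A) :
  is_distr (fun a => (a == a0)%:R : R).
Proof.
split; first by move=> a; rewrite ler0n.
rewrite (bigD1 a0) //= eqxx big1 ?addr0 // => a /negbTE ->; done.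
Qed.

Lemma div_distr (R : realType) (A : finType) (f : A -> R) :
  (forall a, 0 <= f a) -> \sum_a f a != 0 -> is_distr (fun a => f a / \sum_a' f a').
Proof.
move=> h0 hn; split.
  move=> a; apply: divr_ge0 => //; exact: sumr_ge0.
by rewrite -mulr_suml divff.
Qed.

Lemma beh1_strat (R : realType) (K A B : finType) (n : nat) (a0 : A) (p : K -> R)
  (x : K -> seq A -> seq B -> A -> R) :
  realization_plan1 n p x -> is_strat1 (beh1 n a0 x).
Proof.
move=> [_ [_ h0]] k hA hB; rewrite /beh1.
case: ifP => [/and3P [/eqP hs hn hz]|_]; last exact: ind_distr.
by apply: div_distr => // a; apply: h0.
Qed.

Lemma beh2_strat (R : realType) (L A B : finType) (n : nat) (b0 : B) (q : L -> R)
  (y : L -> seq A -> seq B -> B -> R) :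
  realization_plan2 n q y -> is_strat2 (beh2 n b0 y).
Proof.
move=> [_ [_ h0]] l hA hB; rewrite /beh2.
case: ifP => [/and3P [/eqP hs hn hz]|_]; last exact: ind_distr.
by apply: div_distr => // b; apply: h0.
Qed.

Lemma beh1_H1 (R : realType) (K A B : finType) (n : nat) (a0 : A) (p : K -> R)
  (x : K -> seq A -> seq B -> A -> R) k hA hB a :
  realization_plan1 n p x -> size hA = size hB -> (size hA < n)%N ->
  (\sum_a' x k hA hB a') * beh1 n a0 x k hA hB a = x k hA hB a.
Proof.
move=> [_ [_ h0]] hs hn; rewrite /beh1.
case: (eqVneq (\sum_a' x k hA hB a') 0) => hz; last first.
  have e : (size hA == size hB) by apply/eqP.
  by rewrite e hn /= mulrC mulfVK.
have := psumr_eq0P (fun a _ => h0 k hA hB a hs hn) hz.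
by move=> /(_ a isT) ->; rewrite hz mul0r.
Qed.

Lemma beh2_H1 (R : realType) (L A B : finType) (n : nat) (b0 : B) (q : L -> R)
  (y : L -> seq A -> seq B -> B -> R) l hA hB b :
  realization_plan2 n q y -> size hA = size hB -> (size hA < n)%N ->
  (\sum_b' y l hA hB b') * beh2 n b0 y l hA hB b = y l hA hB b.
Proof.
move=> [_ [_ h0]] hs hn; rewrite /beh2.
case: (eqVneq (\sum_b' y l hA hB b') 0) => hz; last first.
  have e : (size hA == size hB) by apply/eqP.
  by rewrite e hn /= mulrC mulfVK.
have := psumr_eq0P (fun b _ => h0 l hA hB b hs hn) hz.
by move=> /(_ b isT) ->; rewrite hz mul0r.
Qed.

Lemma GI1_beh (R : realType) (K L A B : finType) (M : K -> L -> A -> B -> R) (n : nat)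
  (a0 : A) (p : K -> R) (x : K -> seq A -> seq B -> A -> R)
  (tau : L -> seq A -> seq B -> B -> R) k l :
  realization_plan1 n p x ->
  p k * contpay M (beh1 n a0 x) tau k l n [::] [::] = LinF1 M x tau k l n [::] [::].
Proof.
move=> hx; rewrite -hx.1.
apply: (@GI1 _ _ _ _ _ M _ tau (fun k hA hB => \sum_a' x k hA hB a') x n) => //.
- move=> hA hB a hs hn; exact: (beh1_H1 _ _ _ hx hs hn).
- move=> hA hB a b hs hn; exact: hx.2.1.
Qed.

Lemma GI1_rp (R : realType) (K L A B : finType) (M : K -> L -> A -> B -> R) (n : nat)
  (p : K -> R) (sigma : K -> seq A -> seq B -> A -> R)
  (tau : L -> seq A -> seq B -> B -> R) k l :
  p k * contpay M sigma tau k l n [::] [::] = LinF1 M (rp1 p sigma) tau k l n [::] [::].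
Proof.
have -> : p k = rw1 p sigma k [::] [::] by [].
apply: (@GI1 _ _ _ _ _ M sigma tau (rw1 p sigma) (rp1 p sigma) n) => //.
move=> hA hB a b hs hn; exact: rw1_rcons.
Qed.

Lemma GI2_beh (R : realType) (K L A B : finType) (M : K -> L -> A -> B -> R) (n : nat)
  (b0 : B) (q : L -> R) (y : L -> seq A -> seq B -> B -> R)
  (sigma : K -> seq A -> seq B -> A -> R) k l :
  realization_plan2 n q y ->
  q l * contpay M sigma (beh2 n b0 y) k l n [::] [::] = LinF2 M y sigma k l n [::] [::].
Proof.
move=> hy; rewrite -hy.1.
apply: (@GI2 _ _ _ _ _ M sigma _ (fun l hA hB => \sum_b' y l hA hB b') y n) => //.
- move=> hA hB b hs hn; exact: (beh2_H1 _ _ _ hy hs hn).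
- move=> hA hB a b hs hn; exact: hy.2.1.
Qed.

Lemma GI2_rp (R : realType) (K L A B : finType) (M : K -> L -> A -> B -> R) (n : nat)
  (tau : L -> seq A -> seq B -> B -> R) (sigma : K -> seq A -> seq B -> A -> R) k l :
  contpay M sigma tau k l n [::] [::] = LinF2 M (rp2 tau) sigma k l n [::] [::].
Proof.
rewrite -[LHS]mul1r.
have -> : (1 : R) = rw2 tau l [::] [::] by [].
apply: (@GI2 _ _ _ _ _ M sigma tau (rw2 tau) (rp2 tau) n) => //.
move=> hA hB a b hs hn; exact: rw2_rcons.
Qed.

Lemma pay2_exp1 (R : realType) (K L A B : finType) (M : K -> L -> A -> B -> R) n p nu sigma q tau :
  pay2 M n p nu sigma q tau = \sum_l q l * (nu l * \sum_k p k +
     \sum_k p k * contpay M sigma tau k l n [::] [::]).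
Proof.
rewrite /pay2 exchange_big /=; apply: eq_bigr => l _.
rewrite mulr_sumr -big_split /= mulr_sumr; apply: eq_bigr => k _; ring.
Qed.

Lemma pay2_exp2 (R : realType) (K L A B : finType) (M : K -> L -> A -> B -> R) n p nu sigma q tau :
  pay2 M n p nu sigma q tau = \sum_k p k * \sum_l (q l * nu l +
     q l * contpay M sigma tau k l n [::] [::]).
Proof.
rewrite /pay2; apply: eq_bigr => k _; rewrite mulr_sumr; apply: eq_bigr => l _; ring.
Qed.


Definition bmin (R : realType) (B : finType) (b0 : B) (F : B -> R) : B :=
  Order.arg_min b0 xpredT F.
Lemma bmin_le (R : realType) (B : finType) (b0 : B) (F : B -> R) b : F (bmin b0 F) <= F b.
Proof. rewrite /bmin; case: arg_minP => //= i _ h; exact: h. Qed.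
Definition bmax (R : realType) (B : finType) (b0 : B) (F : B -> R) : B :=
  Order.arg_max b0 xpredT F.
Lemma bmax_ge (R : realType) (B : finType) (b0 : B) (F : B -> R) b : F b <= F (bmax b0 F).
Proof. rewrite /bmax; case: arg_maxP => //= i _ h; exact: h. Qed.

Lemma sum_ind_r (R : realType) (I : finType) (q : I) (F : I -> R) :
  \sum_i (i == q)%:R * F i = F q.
Proof.
rewrite (bigD1 q) //= eqxx mul1r big1 ?addr0 // => i /negbTE ->; by rewrite mul0r.
Qed.

Lemma avg_ge (R : realType) (B : finType) (t F : B -> R) c :
  is_distr t -> (forall b, c <= F b) -> c <= \sum_b t b * F b.
Proof.
move=> [t0 t1] h; rewrite -[c]mul1r -t1 mulr_suml; apply: ler_sum => b _.
by apply: ler_wpM2l.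
Qed.

Lemma avg_le (R : realType) (B : finType) (t F : B -> R) c :
  is_distr t -> (forall b, F b <= c) -> \sum_b t b * F b <= c.
Proof.
move=> [t0 t1] h; rewrite -[c]mul1r -t1 mulr_suml; apply: ler_sum => b _.
by apply: ler_wpM2l.
Qed.

Lemma avg_mono (R : realType) (B : finType) (t F G : B -> R) :
  (forall b, 0 <= t b) -> (forall b, F b <= G b) -> \sum_b t b * F b <= \sum_b t b * G b.
Proof. by move=> t0 h; apply: ler_sum => b _; apply: ler_wpM2l. Qed.

Lemma sum3_exch (R : realType) (K A B : finType) (c : B -> R) (g : K -> A -> B -> R) :
  \sum_b c b * (\sum_k \sum_a g k a b) = \sum_k \sum_a \sum_b c b * g k a b.
Proof.
under eq_bigr do rewrite mulr_sumr.
rewrite exchange_big /=; apply: eq_bigr => k _.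
under eq_bigr do rewrite mulr_sumr.
by rewrite exchange_big.
Qed.

Lemma sum3_exch' (R : realType) (K A B : finType) (c : B -> R) (g : K -> A -> B -> R) :
  \sum_b c b * (\sum_a \sum_k g k a b) = \sum_k \sum_a \sum_b c b * g k a b.
Proof.
rewrite -sum3_exch; apply: eq_bigr => b _; by rewrite exchange_big.
Qed.

Lemma LinF1S_sum (R : realType) (K L A B : finType) (M : K -> L -> A -> B -> R)
  (x : K -> seq A -> seq B -> A -> R) (tau : L -> seq A -> seq B -> B -> R) l m hA hB :
  \sum_k LinF1 M x tau k l m.+1 hA hB =
  \sum_b tau l hA hB b * (\sum_k \sum_a M k l a b * x k hA hB a +
     \sum_a \sum_k LinF1 M x tau k l m (rcons hA a) (rcons hB b)).
Proof.
rewrite [RHS](eq_bigr (fun b => tau l hA hB b * (\sum_k \sum_a M k l a b * x k hA hB a) +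
  tau l hA hB b * (\sum_a \sum_k LinF1 M x tau k l m (rcons hA a) (rcons hB b)))); last first.
  by move=> b _; rewrite mulrDr.
rewrite big_split /= sum3_exch sum3_exch' -big_split /=.
apply: eq_bigr => k _ /=; rewrite -big_split /=; apply: eq_bigr => a _.
rewrite -big_split /=; apply: eq_bigr => b _; ring.
Qed.

Lemma LinF2S_sum (R : realType) (K L A B : finType) (M : K -> L -> A -> B -> R)
  (y : L -> seq A -> seq B -> B -> R) (sigma : K -> seq A -> seq B -> A -> R) k m hA hB :
  \sum_l LinF2 M y sigma k l m.+1 hA hB =
  \sum_a sigma k hA hB a * (\sum_l \sum_b M k l a b * y l hA hB b +
     \sum_b \sum_l LinF2 M y sigma k l m (rcons hA a) (rcons hB b)).
Proof.
rewrite [RHS](eq_bigr (fun a => sigma k hA hB a * (\sum_l \sum_b M k l a b * y l hA hB b) +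
  sigma k hA hB a * (\sum_b \sum_l LinF2 M y sigma k l m (rcons hA a) (rcons hB b)))); last first.
  by move=> a _; rewrite mulrDr.
rewrite big_split /= sum3_exch sum3_exch' -big_split /=.
apply: eq_bigr => l _ /=; rewrite -big_split /= exchange_big; apply: eq_bigr => b _.
rewrite -big_split /=; apply: eq_bigr => a _; ring.
Qed.

Fixpoint Vf1 (R : realType) (K L A B : finType) (M : K -> L -> A -> B -> R) (b0 : B)
  (x : K -> seq A -> seq B -> A -> R) (l : L) (m : nat) (hA : seq A) (hB : seq B) : R :=
  match m with
  | 0 => 0
  | m'.+1 => let F := fun b => \sum_k \sum_a M k l a b * x k hA hB a +
                \sum_a Vf1 M b0 x l m' (rcons hA a) (rcons hB b) in F (bmin b0 F)
  end.

Definition Fb1 (R : realType) (K L A B : finType) (M : K -> L -> A -> B -> R) (b0 : B)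
  (x : K -> seq A -> seq B -> A -> R) (l : L) (m : nat) (hA : seq A) (hB : seq B) (b : B) : R :=
  \sum_k \sum_a M k l a b * x k hA hB a + \sum_a Vf1 M b0 x l m (rcons hA a) (rcons hB b).

Definition taup (R : realType) (K L A B : finType) (M : K -> L -> A -> B -> R) (b0 : B)
  (x : K -> seq A -> seq B -> A -> R) (n : nat) : L -> seq A -> seq B -> B -> R :=
  fun l hA hB b => (b == bmin b0 (Fb1 M b0 x l (n - size hA).-1 hA hB))%:R.

Lemma Vf1S (R : realType) (K L A B : finType) (M : K -> L -> A -> B -> R) (b0 : B) x l m hA hB :
  Vf1 M b0 x l m.+1 hA hB = Fb1 M b0 x l m hA hB (bmin b0 (Fb1 M b0 x l m hA hB)).
Proof. by []. Qed.

Lemma taup_strat (R : realType) (K L A B : finType) (M : K -> L -> A -> B -> R) (b0 : B) x n :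
  is_strat2 (taup M b0 x n).
Proof. move=> l hA hB; exact: ind_distr. Qed.

Lemma LinF1_ge_Vf1 (R : realType) (K L A B : finType) (M : K -> L -> A -> B -> R) (b0 : B)
  (x : K -> seq A -> seq B -> A -> R) (tau : L -> seq A -> seq B -> B -> R) l :
  is_strat2 tau -> forall m hA hB, Vf1 M b0 x l m hA hB <= \sum_k LinF1 M x tau k l m hA hB.
Proof.
move=> ht; elim=> [|m IH] hA hB; first by rewrite /= big1.
rewrite LinF1S_sum Vf1S; apply: avg_ge; first exact: ht.
move=> b; apply: le_trans (bmin_le _ _ b) _.
rewrite /Fb1 lerD2l; apply: ler_sum => a _; exact: IH.
Qed.

Lemma LinF1_pure (R : realType) (K L A B : finType) (M : K -> L -> A -> B -> R) (b0 : B)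
  (x : K -> seq A -> seq B -> A -> R) n l :
  forall m hA hB, (size hA + m)%N = n ->
  \sum_k LinF1 M x (taup M b0 x n) k l m hA hB = Vf1 M b0 x l m hA hB.
Proof.
elim=> [|m IH] hA hB hn; first by rewrite /= big1.
rewrite LinF1S_sum Vf1S.
rewrite /taup.
have -> : (n - size hA).-1 = m by lia.
rewrite sum_ind_r /Fb1; congr (_ + _); apply: eq_bigr => a _; apply: IH.
rewrite size_rcons; lia.
Qed.

Fixpoint Vf2 (R : realType) (K L A B : finType) (M : K -> L -> A -> B -> R) (a0 : A)
  (y : L -> seq A -> seq B -> B -> R) (k : K) (m : nat) (hA : seq A) (hB : seq B) : R :=
  match m with
  | 0 => 0
  | m'.+1 => let F := fun a => \sum_l \sum_b M k l a b * y l hA hB b +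
                \sum_b Vf2 M a0 y k m' (rcons hA a) (rcons hB b) in F (bmax a0 F)
  end.

Definition Fa2 (R : realType) (K L A B : finType) (M : K -> L -> A -> B -> R) (a0 : A)
  (y : L -> seq A -> seq B -> B -> R) (k : K) (m : nat) (hA : seq A) (hB : seq B) (a : A) : R :=
  \sum_l \sum_b M k l a b * y l hA hB b + \sum_b Vf2 M a0 y k m (rcons hA a) (rcons hB b).

Definition sigp (R : realType) (K L A B : finType) (M : K -> L -> A -> B -> R) (a0 : A)
  (y : L -> seq A -> seq B -> B -> R) (n : nat) : K -> seq A -> seq B -> A -> R :=
  fun k hA hB a => (a == bmax a0 (Fa2 M a0 y k (n - size hA).-1 hA hB))%:R.

Lemma Vf2S (R : realType) (K L A B : finType) (M : K -> L -> A -> B -> R) (a0 : A) y k m hA hB :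
  Vf2 M a0 y k m.+1 hA hB = Fa2 M a0 y k m hA hB (bmax a0 (Fa2 M a0 y k m hA hB)).
Proof. by []. Qed.

Lemma sigp_strat (R : realType) (K L A B : finType) (M : K -> L -> A -> B -> R) (a0 : A) y n :
  is_strat1 (sigp M a0 y n).
Proof. move=> k hA hB; exact: ind_distr. Qed.

Lemma LinF2_le_Vf2 (R : realType) (K L A B : finType) (M : K -> L -> A -> B -> R) (a0 : A)
  (y : L -> seq A -> seq B -> B -> R) (sigma : K -> seq A -> seq B -> A -> R) k :
  is_strat1 sigma -> forall m hA hB, \sum_l LinF2 M y sigma k l m hA hB <= Vf2 M a0 y k m hA hB.
Proof.
move=> hs; elim=> [|m IH] hA hB; first by rewrite /= big1.
rewrite LinF2S_sum Vf2S; apply: avg_le; first exact: hs.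
move=> a; apply: le_trans (bmax_ge _ _ a).
rewrite /Fa2 lerD2l; apply: ler_sum => b _; exact: IH.
Qed.

Lemma LinF2_pure (R : realType) (K L A B : finType) (M : K -> L -> A -> B -> R) (a0 : A)
  (y : L -> seq A -> seq B -> B -> R) n k :
  forall m hA hB, (size hA + m)%N = n ->
  \sum_l LinF2 M y (sigp M a0 y n) k l m hA hB = Vf2 M a0 y k m hA hB.
Proof.
elim=> [|m IH] hA hB hn; first by rewrite /= big1.
rewrite LinF2S_sum Vf2S /sigp.
have -> : (n - size hA).-1 = m by lia.
rewrite sum_ind_r /Fa2; congr (_ + _); apply: eq_bigr => b _; apply: IH.
rewrite size_rcons; lia.
Qed.

Lemma contpay_ext2 (R : realType) (K L A B : finType) (M : K -> L -> A -> B -> R)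
  (sigma : K -> seq A -> seq B -> A -> R) (tau tau' : L -> seq A -> seq B -> B -> R) k l N :
  (forall hA hB, size hA = size hB -> (size hA < N)%N -> tau l hA hB =1 tau' l hA hB) ->
  forall m hA hB, size hA = size hB -> (size hA + m <= N)%N ->
  contpay M sigma tau k l m hA hB = contpay M sigma tau' k l m hA hB.
Proof.
move=> H; elim=> [|m IH] hA hB hs hn //=.
apply: eq_bigr => a _; apply: eq_bigr => b _.
rewrite H //; last by lia.
rewrite IH // ?size_rcons ?hs //; lia.
Qed.

Lemma contpay_ext1 (R : realType) (K L A B : finType) (M : K -> L -> A -> B -> R)
  (sigma sigma' : K -> seq A -> seq B -> A -> R) (tau : L -> seq A -> seq B -> B -> R) k l N :
  (forall hA hB, size hA = size hB -> (size hA < N)%N -> sigma k hA hB =1 sigma' k hA hB) ->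
  forall m hA hB, size hA = size hB -> (size hA + m <= N)%N ->
  contpay M sigma tau k l m hA hB = contpay M sigma' tau k l m hA hB.
Proof.
move=> H; elim=> [|m IH] hA hB hs hn //=.
apply: eq_bigr => a _; apply: eq_bigr => b _.
rewrite H //; last by lia.
rewrite IH // ?size_rcons ?hs //; lia.
Qed.

Lemma LinF1_ge_u (R : realType) (K L A B : finType) (M : K -> L -> A -> B -> R) n p nu
  (x : K -> seq A -> seq B -> A -> R) (u : L -> seq A -> seq B -> A -> B -> R) u0 ut l
  (tau : L -> seq A -> seq B -> B -> R) :
  LP2_feasible M n p nu x u u0 ut -> is_strat2 tau ->
  forall m hA hB, size hA = size hB -> (size hA + m.+1)%N = n ->
  \sum_b tau l hA hB b * (\sum_k \sum_a M k l a b * x k hA hB a + \sum_a u l hA hB a b)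
   <= \sum_k LinF1 M x tau k l m.+1 hA hB.
Proof.
move=> [_ [_ [_ [Hu Hterm]]]] ht; elim=> [|m IH] hA hB hs hn.
  rewrite LinF1S_sum; apply: avg_mono => [b|b]; first exact: (ht _ _ _).1.
  rewrite lerD2l.
  have -> : \sum_a u l hA hB a b = 0.
    by apply: big1 => a _; apply: Hterm => //; lia.
  by rewrite big1 // => a _; rewrite big1.
rewrite LinF1S_sum; apply: avg_mono => [b|b]; first exact: (ht _ _ _).1.
rewrite lerD2l; apply: ler_sum => a _.
apply: le_trans (IH (rcons hA a) (rcons hB b) _ _); last first.
- rewrite size_rcons; lia.
- by rewrite !size_rcons hs.
apply: avg_ge; first exact: ht.
move=> b'; apply: Hu => //; lia.
Qed.

Lemma pay2_LinF_beh (R : realType) (K L A B : finType) (M : K -> L -> A -> B -> R) n p nu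
  (a0 : A) (x : K -> seq A -> seq B -> A -> R) q tau :
  realization_plan1 n p x -> is_distr p ->
  pay2 M n p nu (beh1 n a0 x) q tau =
  \sum_l q l * (nu l + \sum_k LinF1 M x tau k l n [::] [::]).
Proof.
move=> hx [_ p1]; rewrite pay2_exp1 p1; apply: eq_bigr => l _; rewrite mulr1.
by congr (_ * (_ + _)); apply: eq_bigr => k _; rewrite GI1_beh.
Qed.

Lemma pay2_LinF_rp (R : realType) (K L A B : finType) (M : K -> L -> A -> B -> R) n p nu
  (sigma : K -> seq A -> seq B -> A -> R) q tau :
  is_distr p ->
  pay2 M n p nu sigma q tau =
  \sum_l q l * (nu l + \sum_k LinF1 M (rp1 p sigma) tau k l n [::] [::]).
Proof.
move=> [_ p1]; rewrite pay2_exp1 p1; apply: eq_bigr => l _; rewrite mulr1.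
by congr (_ * (_ + _)); apply: eq_bigr => k _; rewrite GI1_rp.
Qed.

Lemma pay2_LinF2_beh (R : realType) (K L A B : finType) (M : K -> L -> A -> B -> R) n p nu
  (b0 : B) (y : L -> seq A -> seq B -> B -> R) q sigma :
  realization_plan2 n q y ->
  pay2 M n p nu sigma q (beh2 n b0 y) =
  \sum_k p k * (\sum_l q l * nu l + \sum_l LinF2 M y sigma k l n [::] [::]).
Proof.
move=> hy; rewrite pay2_exp2; apply: eq_bigr => k _.
by rewrite big_split /=; congr (_ * (_ + _)); apply: eq_bigr => l _; rewrite GI2_beh.
Qed.

Lemma pay2_delta (R : realType) (K L A B : finType) (M : K -> L -> A -> B -> R) n p nu
  (sigma : K -> seq A -> seq B -> A -> R) tau l :
  is_distr p ->
  pay2 M n p nu sigma (fun l' => (l' == l)%:R) tau =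
  nu l + \sum_k p k * contpay M sigma tau k l n [::] [::].
Proof.
move=> [_ p1]; rewrite pay2_exp1 sum_ind_r p1 mulr1 //.
Qed.

Lemma delta_distr (R : realType) (L : finType) (l : L) : is_distr (fun l' => (l' == l)%:R : R).
Proof. exact: ind_distr. Qed.

Lemma LP2_lb (R : realType) (K L A B : finType) (M : K -> L -> A -> B -> R) n p nu
  (a0 : A) (x : K -> seq A -> seq B -> A -> R) u u0 ut :
  (0 < n)%N -> is_distr p -> LP2_feasible M n p nu x u u0 ut ->
  forall q tau, is_distr q -> is_strat2 tau ->
  ut <= pay2 M n p nu (beh1 n a0 x) q tau.
Proof.
move=> n0 hp hLP q tau hq ht.
rewrite pay2_LinF_beh //; last exact: hLP.1.
apply: avg_ge => // l.
apply: le_trans (hLP.2.1 l) _; rewrite addrC lerD2l.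
have hn : n = (n.-1).+1 by lia.
have hs : (size (@nil A) + (n.-1).+1)%N = n by rewrite /= -hn.
have H := @LinF1_ge_u _ _ _ _ _ M n p nu x u u0 ut l tau hLP ht (n.-1) [::] [::] erefl hs.
rewrite {1}hn; apply: le_trans H.
apply: avg_ge; first exact: ht.
move=> b; exact: hLP.2.2.1.
Qed.


Definition Hist (A B : finType) (n : nat) :=
  ('I_n.+1 * ({ffun 'I_n.+1 -> A} * {ffun 'I_n.+1 -> B}))%type.

Definition enc (A B : finType) (n : nat) (a0 : A) (b0 : B) (hA : seq A) (hB : seq B) : Hist A B n :=
  (inord (size hA), ([ffun i : 'I_n.+1 => nth a0 hA i], [ffun i : 'I_n.+1 => nth b0 hB i])).

Definition decA (A B : finType) (n : nat) (hh : Hist A B n) : seq A :=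
  mkseq (fun i => hh.2.1 (inord i)) hh.1.
Definition decB (A B : finType) (n : nat) (hh : Hist A B n) : seq B :=
  mkseq (fun i => hh.2.2 (inord i)) hh.1.

Lemma dec_enc (A B : finType) (n : nat) (a0 : A) (b0 : B) (hA : seq A) (hB : seq B) :
  (size hA <= n)%N -> size hA = size hB ->
  decA (enc n a0 b0 hA hB) = hA /\ decB (enc n a0 b0 hA hB) = hB.
Proof.
move=> hn hs; rewrite /decA /decB /enc /= inordK; last by lia.
split.
  rewrite -[RHS](mkseq_nth a0) /mkseq; apply/eq_in_map => i; rewrite mem_iota => /andP [_ hi].
  rewrite ffunE inordK //; lia.
rewrite hs -[RHS](mkseq_nth b0) /mkseq; apply/eq_in_map => i; rewrite mem_iota => /andP [_ hi].
rewrite ffunE inordK //; lia.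
Qed.

Definition behS (R : realType) (K A B : finType) (n : nat) (a0 : A) (b0 : B)
  (s : {ffun K * Hist A B n -> A}) : K -> seq A -> seq B -> A -> R :=
  fun k hA hB a => (a == s (k, enc n a0 b0 hA hB))%:R.
Definition behT (R : realType) (L A B : finType) (n : nat) (a0 : A) (b0 : B)
  (t : {ffun Hist A B n -> B}) : L -> seq A -> seq B -> B -> R :=
  fun l hA hB b => (b == t (enc n a0 b0 hA hB))%:R.

Lemma behS_strat (R : realType) (K A B : finType) (n : nat) (a0 : A) (b0 : B) s :
  is_strat1 (@behS R K A B n a0 b0 s).
Proof. move=> k hA hB; exact: ind_distr. Qed.
Lemma behT_strat (R : realType) (L A B : finType) (n : nat) (a0 : A) (b0 : B) t :
  is_strat2 (@behT R L A B n a0 b0 t).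
Proof. move=> l hA hB; exact: ind_distr. Qed.

Lemma LinF2_ext (R : realType) (K L A B : finType) (M : K -> L -> A -> B -> R)
  (y y' : L -> seq A -> seq B -> B -> R) (sigma : K -> seq A -> seq B -> A -> R) k l :
  (forall hA hB b, y l hA hB b = y' l hA hB b) ->
  forall m hA hB, LinF2 M y sigma k l m hA hB = LinF2 M y' sigma k l m hA hB.
Proof.
move=> H; elim=> [|m IH] hA hB //=.
apply: eq_bigr => a _; apply: eq_bigr => b _; by rewrite H IH.
Qed.

Lemma pay2_ext1 (R : realType) (K L A B : finType) (M : K -> L -> A -> B -> R) n p nu
  (sigma sigma' : K -> seq A -> seq B -> A -> R) q tau :
  (forall k hA hB, size hA = size hB -> (size hA < n)%N -> sigma k hA hB =1 sigma' k hA hB) ->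
  pay2 M n p nu sigma q tau = pay2 M n p nu sigma' q tau.
Proof.
move=> H; rewrite /pay2; apply: eq_bigr => k _; apply: eq_bigr => l _.
by rewrite (@contpay_ext1 _ _ _ _ _ M sigma sigma' tau k l n (H k) n [::] [::]).
Qed.

Lemma pay2_ext2 (R : realType) (K L A B : finType) (M : K -> L -> A -> B -> R) n p nu
  (sigma : K -> seq A -> seq B -> A -> R) q (tau tau' : L -> seq A -> seq B -> B -> R) :
  (forall l hA hB, size hA = size hB -> (size hA < n)%N -> tau l hA hB =1 tau' l hA hB) ->
  pay2 M n p nu sigma q tau = pay2 M n p nu sigma q tau'.
Proof.
move=> H; rewrite /pay2; apply: eq_bigr => k _; apply: eq_bigr => l _.
by rewrite (@contpay_ext2 _ _ _ _ _ M sigma tau tau' k l n (H l) n [::] [::]).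
Qed.

Lemma eqle (R : realType) (x y : R) : x = y -> x <= y.
Proof. by move=> ->. Qed.

Lemma mix1 (R : realType) (K L A B : finType) (M : K -> L -> A -> B -> R) n (p : K -> R)
  (a0 : A) (b0 : B) (xw : {ffun K * Hist A B n -> A} -> R)
  (tau : L -> seq A -> seq B -> B -> R) l :
  \sum_k LinF1 M (fun k hA hB a => \sum_s xw s * rp1 p (@behS R K A B n a0 b0 s) k hA hB a) tau k l n [::] [::]
  = \sum_s xw s * \sum_k p k * contpay M (@behS R K A B n a0 b0 s) tau k l n [::] [::].
Proof.
under eq_bigr do rewrite (@LinF1_lin _ _ _ _ _ M _ xw (fun s => rp1 p (@behS R K A B n a0 b0 s))).
rewrite exchange_big /=; apply: eq_bigr => s _; rewrite mulr_sumr.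
by apply: eq_bigr => k _; rewrite GI1_rp.
Qed.

Lemma value2_exists (R : realType) (K L A B : finType) (M : K -> L -> A -> B -> R) n
  (p : K -> R) (nu : L -> R) (a0 : A) (b0 : B) (l0 : L) :
  (0 < n)%N -> is_distr p -> exists v, is_value2 M n p nu v.
Proof.
move=> n0 hp.
pose G := fun (s : {ffun K * Hist A B n -> A}) (lt : L * {ffun Hist A B n -> B}) =>
  pay2 M n p nu (@behS R K A B n a0 b0 s) (fun l' => (l' == lt.1)%:R) (@behT R L A B n a0 b0 lt.2).
have [v [xw [yw [xd [yd [hx hy]]]]]] := minimax G [ffun => a0] (l0, [ffun => b0]).
exists v; split.
- pose xr := fun k hA hB a => \sum_s xw s * rp1 p (@behS R K A B n a0 b0 s) k hA hB a.
  have hxr : realization_plan1 n p xr.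
    apply: rp1_comb; [move=> s; apply: rp1_plan => //; exact: behS_strat | exact: xd.1 | exact: xd.2].
  exists (beh1 n a0 xr); split; first exact: beh1_strat hxr.
  move=> q tau hq ht; rewrite pay2_LinF_beh //; apply: avg_ge => // l.
  apply: le_trans (_ : nu l + Vf1 M b0 xr l n [::] [::] <= _); last first.
    by rewrite lerD2l; exact: LinF1_ge_Vf1.
  rewrite -(@LinF1_pure _ _ _ _ _ M b0 xr n l n [::] [::] erefl) mix1.
  pose tl := [ffun hh : Hist A B n =>
     bmin b0 (Fb1 M b0 xr l (n - size (decA hh)).-1 (decA hh) (decB hh))].
  apply: le_trans (hx (l, tl)) _; apply: eqle.
  rewrite -[nu l]mul1r -xd.2 mulr_suml -big_split; apply: eq_bigr => s _ /=.
  rewrite -mulrDr; congr (_ * _). rewrite /G pay2_delta //; congr (_ + _).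
  apply: eq_bigr => k _; congr (_ * _).
  apply: (@contpay_ext2 _ _ _ _ _ M _ _ _ k l n) => // hA hB hs hn b.
  rewrite /behT /taup ffunE.
  by case: (@dec_enc A B n a0 b0 hA hB (ltnW hn) hs) => -> ->.
- pose yr := fun l hA hB b => \sum_(lt : L * {ffun Hist A B n -> B})
     yw lt * ((l == lt.1)%:R * rp2 (@behT R L A B n a0 b0 lt.2) l hA hB b).
  pose q := fun l => \sum_(lt : L * {ffun Hist A B n -> B}) yw lt * (l == lt.1)%:R.
  have hyr : realization_plan2 n q yr.
    apply: rp2_comb; [move=> lt; apply: rp2_plan; exact: behT_strat | exact: yd.1].
  have hq : is_distr q.
    split.
      move=> l; apply: sumr_ge0 => lt _; apply: mulr_ge0; [exact: yd.1 | by rewrite ler0n].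
    rewrite /q exchange_big /= -[RHS]yd.2; apply: eq_bigr => lt _.
    by rewrite -mulr_sumr (ind_distr R lt.1).2 mulr1.
  have mix2 : forall sigma, pay2 M n p nu sigma q (beh2 n b0 yr) =
      \sum_lt yw lt * pay2 M n p nu sigma (fun l' => (l' == lt.1)%:R) (@behT R L A B n a0 b0 lt.2).
    move=> sigma; rewrite pay2_LinF2_beh //.
    have e1 : \sum_l q l * nu l = \sum_lt yw lt * nu lt.1.
      rewrite /q; under eq_bigr do rewrite mulr_suml.
      rewrite exchange_big /=; apply: eq_bigr => lt _.
      under eq_bigr do rewrite -mulrA; rewrite -mulr_sumr; congr (_ * _).
      by rewrite sum_ind_r.
    have e2 : forall k, \sum_l LinF2 M yr sigma k l n [::] [::] =
        \sum_lt yw lt * contpay M sigma (@behT R L A B n a0 b0 lt.2) k lt.1 n [::] [::].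
      move=> k.
      have e3 : forall l, LinF2 M yr sigma k l n [::] [::] =
          \sum_lt (yw lt * (l == lt.1)%:R) * LinF2 M (rp2 (@behT R L A B n a0 b0 lt.2)) sigma k l n [::] [::].
        move=> l; rewrite -(@LinF2_lin _ _ _ _ _ M _ (fun lt l => yw lt * (l == lt.1)%:R)
                  (fun lt => rp2 (@behT R L A B n a0 b0 lt.2))).
        apply: LinF2_ext => hA hB b; apply: eq_bigr => lt _; by rewrite mulrA.
      under eq_bigr do rewrite e3.
      rewrite exchange_big /=; apply: eq_bigr => lt _.
      under eq_bigr do rewrite -mulrA; rewrite -mulr_sumr; congr (_ * _).
      by rewrite sum_ind_r GI2_rp.
    under eq_bigr do rewrite e1 e2 mulrDr.
    rewrite big_split /= -mulr_suml hp.2 mul1r.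
    under [RHS]eq_bigr do rewrite pay2_delta // mulrDr.
    rewrite big_split /=; congr (_ + _).
    under eq_bigr do rewrite mulr_sumr.
    rewrite exchange_big /=; apply: eq_bigr => lt _; rewrite mulr_sumr.
    by apply: eq_bigr => k _; rewrite mulrCA.
  exists q, (beh2 n b0 yr); split; first done; split; first exact: beh2_strat hyr.
  move=> sigma hs.
  pose sp := [ffun kh : K * Hist A B n =>
     bmax a0 (Fa2 M a0 yr kh.1 (n - size (decA kh.2)).-1 (decA kh.2) (decB kh.2))].
  apply: le_trans (_ : pay2 M n p nu (sigp M a0 yr n) q (beh2 n b0 yr) <= _).
    rewrite !pay2_LinF2_beh //; apply: ler_sum => k _; apply: ler_wpM2l; first exact: hp.1.
    rewrite lerD2l (@LinF2_pure _ _ _ _ _ M a0 yr n k n [::] [::] erefl).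
    exact: LinF2_le_Vf2.
  rewrite (@pay2_ext1 _ _ _ _ _ M n p nu _ (@behS R K A B n a0 b0 sp)); last first.
    move=> k hA hB hsz hn a; rewrite /behS /sigp ffunE /=.
    by case: (@dec_enc A B n a0 b0 hA hB (ltnW hn) hsz) => -> ->.
  rewrite mix2; apply: le_trans (hy sp); apply: eqle.
  by apply: eq_bigr => lt _; rewrite mulrC.
Qed.


Lemma value2_unique (R : realType) (K L A B : finType) (M : K -> L -> A -> B -> R) n p nu v v' :
  is_value2 M n p nu v -> is_value2 M n p nu v' -> v = v'.
Proof.
move=> [[s1 [hs1 g1]] [q1 [t1 [hq1 [ht1 g1']]]]] [[s2 [hs2 g2]] [q2 [t2 [hq2 [ht2 g2']]]]].
apply/eqP; rewrite eq_le; apply/andP; split.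
  exact: le_trans (g1 q2 t2 hq2 ht2) (g2' s1 hs1).
exact: le_trans (g2 q1 t1 hq1 ht1) (g1' s2 hs2).
Qed.

Lemma LP2_attain (R : realType) (K L A B : finType) (M : K -> L -> A -> B -> R) n p nu v (b0 : B) :
  (0 < n)%N -> is_distr p -> is_value2 M n p nu v ->
  exists x u u0, LP2_feasible M n p nu x u u0 v.
Proof.
move=> n0 hp [[s [hs g]] _].
pose x := rp1 p s.
exists x, (fun l hA hB a b => Vf1 M b0 x l (n - (size hA).+1) (rcons hA a) (rcons hB b)),
  (fun l => Vf1 M b0 x l n [::] [::]).
split; first exact: rp1_plan.
split.
  move=> l; have := g _ (taup M b0 x n) (delta_distr R l) (taup_strat _ _ _ _).
  rewrite pay2_delta // addrC.
  rewrite -(@LinF1_pure _ _ _ _ _ M b0 x n l n [::] [::] erefl).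
  suff -> : \sum_k p k * contpay M s (taup M b0 x n) k l n [::] [::] =
            \sum_k LinF1 M x (taup M b0 x n) k l n [::] [::] by [].
  by apply: eq_bigr => k _; rewrite GI1_rp.
split.
  move=> l b; have hn : n = (n.-1).+1 by lia.
  rewrite {1}hn Vf1S; apply: le_trans (bmin_le _ _ b) _; apply: eqle.
  by rewrite /Fb1 /= subn1.
split.
  move=> l hA hB a b b' hsz hn.
  have -> : (n - (size hA).+1)%N = (n - (size hA).+2).+1 by lia.
  rewrite Vf1S; apply: le_trans (bmin_le _ _ b') _; apply: eqle.
  by rewrite /Fb1 size_rcons.
move=> l hA hB a b hsz hn.
by have -> : (n - (size hA).+1)%N = 0%N by lia.
Qed.

Lemma LP2_ub (R : realType) (K L A B : finType) (M : K -> L -> A -> B -> R) n p nu v (a0 : A)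
  x u u0 ut :
  (0 < n)%N -> is_distr p -> is_value2 M n p nu v -> LP2_feasible M n p nu x u u0 ut -> ut <= v.
Proof.
move=> n0 hp [_ [q [t [hq [ht g]]]]] hLP.
apply: le_trans (LP2_lb a0 n0 hp hLP hq ht) _.
apply: g; apply: beh1_strat; exact: hLP.1.
Qed.

Lemma part_i (R : realType) (K L A B : finType) (M : K -> L -> A -> B -> R) n
  (p : K -> R) (nu : L -> R) (a0 : A) (b0 : B) (l0 : L) :
  (0 < n)%N -> is_distr p ->
  ((exists v, is_value2 M n p nu v /\ is_LPmax2 M n p nu v) /\
   (forall x u u0 ut, LP2_feasible M n p nu x u u0 ut ->
      is_LPmax2 M n p nu ut ->
      exists sigma, security1 M n p nu sigma /\
        forall k, p k != 0 -> forall a,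
          sigma k [::] [::] a = x k [::] [::] a / p k)).
Proof.
move=> n0 hp.
have [v hv] := value2_exists M nu a0 b0 l0 n0 hp.
have hLPv : is_LPmax2 M n p nu v.
  split; first exact: (LP2_attain b0 n0 hp hv).
  move=> x u u0 ut hl; exact: (LP2_ub a0 n0 hp hv hl).
split; first by exists v.
move=> x u u0 ut hLP [_ hmax].
have eq : ut = v.
  apply/eqP; rewrite eq_le; apply/andP; split; first exact: (LP2_ub a0 n0 hp hv hLP).
  have [x' [u' [u0' hLP']]] := hLPv.1; exact: hmax _ _ _ _ hLP'.
exists (beh1 n a0 x); split.
  split; first exact: (beh1_strat a0 hLP.1).
  move=> v' hv' q tau hq ht.
  rewrite -(value2_unique hv hv') -eq; exact: (LP2_lb a0 n0 hp hLP hq ht).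
move=> k hk a; rewrite /beh1 /= n0 hLP.1.1 hk //.
Qed.


Definition swapS (R : realType) (X A B C : Type) (f : X -> seq A -> seq B -> C -> R) :
  X -> seq B -> seq A -> C -> R := fun x hB hA c => f x hA hB c.

Definition Mswap (R : realType) (K L A B : finType) (M : K -> L -> A -> B -> R) :
  L -> K -> B -> A -> R := fun l k b a => - M k l a b.

Lemma contpay_swap (R : realType) (K L A B : finType) (M : K -> L -> A -> B -> R)
  (sigma : K -> seq A -> seq B -> A -> R) (tau : L -> seq A -> seq B -> B -> R) k l m hA hB :
  contpay M sigma tau k l m hA hB =
  - contpay (Mswap M) (swapS tau) (swapS sigma) l k m hB hA.
Proof.
elim: m hA hB => [|m IH] hA hB /=; first by rewrite oppr0.
rewrite exchange_big -sumrN; apply: eq_bigr => b _; rewrite -sumrN; apply: eq_bigr => a _.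
rewrite IH /swapS /Mswap; ring.
Qed.

Lemma pay_swap (R : realType) (K L A B : finType) (M : K -> L -> A -> B -> R) n mu q p
  (sigma : K -> seq A -> seq B -> A -> R) (tau : L -> seq A -> seq B -> B -> R) :
  pay1 M n mu q p sigma tau =
  - pay2 (Mswap M) n q (fun k => - mu k) (swapS tau) p (swapS sigma).
Proof.
rewrite /pay1 /pay2 exchange_big -sumrN; apply: eq_bigr => l _; rewrite -sumrN.
apply: eq_bigr => k _; rewrite (contpay_swap M sigma tau); ring.
Qed.

Lemma value_12 (R : realType) (K L A B : finType) (M : K -> L -> A -> B -> R) n mu q v :
  is_value2 (Mswap M) n q (fun k => - mu k) v -> is_value1 M n mu q (- v).
Proof.
move=> [[s [hs g]] [p [t [hp [ht g']]]]]; split.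
  exists (swapS s); split; first by move=> l hA hB; exact: hs.
  move=> p' sigma hp' hsig; rewrite pay_swap lerN2.
  apply: g => //; move=> k hB hA; exact: hsig.
exists p, (swapS t); split => //; split; first by move=> k hA hB; exact: ht.
move=> tau htau; rewrite pay_swap lerN2; apply: (g' (swapS tau)).
move=> l hB hA; exact: htau.
Qed.

Lemma value_21 (R : realType) (K L A B : finType) (M : K -> L -> A -> B -> R) n mu q v :
  is_value1 M n mu q v -> is_value2 (Mswap M) n q (fun k => - mu k) (- v).
Proof.
move=> [[t [ht g]] [p [s [hp [hs g']]]]]; split.
  exists (swapS t); split; first by move=> l hB hA; exact: ht.
  move=> p' tau hp' htau.
  have := g p' (swapS tau) hp' (fun k hA hB => htau k hB hA).
  by rewrite pay_swap lerNl.
exists p, (swapS s); split => //; split; first by move=> k hB hA; exact: hs.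
move=> sigma hsig.
have := g' (swapS sigma) (fun l hA hB => hsig l hB hA).
by rewrite pay_swap lerNr.
Qed.

Lemma LP_12 (R : realType) (K L A B : finType) (M : K -> L -> A -> B -> R) n mu q
  (x : L -> seq B -> seq A -> B -> R) (u : K -> seq B -> seq A -> B -> A -> R) u0 ut :
  LP2_feasible (Mswap M) n q (fun k => - mu k) x u u0 ut ->
  LP1_feasible M n mu q (swapS x) (fun k hA hB a b => - u k hB hA b a) (fun k => - u0 k) (- ut).
Proof.
move=> [[r1 [r2 r3]] [h1 [h2 [h3 h4]]]].
split; [split; [|split]|split; [|split; [|split]]].
- exact: r1.
- move=> l hA hB a b hs hn; apply: (r2 l hB hA b a (esym hs)); by rewrite -hs.
- move=> l hA hB b hs hn; apply: (r3 l hB hA b (esym hs)); by rewrite -hs.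
- move=> k; have := h1 k; lra.
- move=> k a; have := h2 k a; rewrite /Mswap /swapS.
  under eq_bigr do under eq_bigr do rewrite mulNr.
  under eq_bigr do rewrite sumrN.
  rewrite sumrN sumrN; lra.
- move=> k hA hB a b a' hs hn; have := h3 k hB hA b a a' (esym hs).
  rewrite -hs => /(_ hn); rewrite /Mswap /swapS.
  under eq_bigr do under eq_bigr do rewrite mulNr.
  under eq_bigr do rewrite sumrN.
  rewrite sumrN sumrN; lra.
- move=> k hA hB a b hs hn; rewrite h4 ?oppr0 //; lia.
Qed.

Lemma LP_21 (R : realType) (K L A B : finType) (M : K -> L -> A -> B -> R) n mu q
  (y : L -> seq A -> seq B -> B -> R) (w : K -> seq A -> seq B -> A -> B -> R) w0 wt :
  LP1_feasible M n mu q y w w0 wt ->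
  LP2_feasible (Mswap M) n q (fun k => - mu k) (swapS y)
     (fun k hB hA b a => - w k hA hB a b) (fun k => - w0 k) (- wt).
Proof.
move=> [[r1 [r2 r3]] [h1 [h2 [h3 h4]]]].
split; [split; [|split]|split; [|split; [|split]]].
- exact: r1.
- move=> l hB hA b a hs hn; apply: (r2 l hA hB a b (esym hs)); by rewrite -hs.
- move=> l hB hA b hs hn; apply: (r3 l hA hB b (esym hs)); by rewrite -hs.
- move=> k; have := h1 k; lra.
- move=> k a; have := h2 k a; rewrite /Mswap /swapS.
  under [X in _ -> _ <= X + _]eq_bigr do under eq_bigr do rewrite mulNr.
  under [X in _ -> _ <= X + _]eq_bigr do rewrite sumrN.
  rewrite sumrN sumrN; lra.
- move=> k hB hA b a a' hs hn; have := h3 k hA hB a b a' (esym hs).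
  rewrite -hs => /(_ hn); rewrite /Mswap /swapS.
  under [X in _ -> _ <= X + _]eq_bigr do under eq_bigr do rewrite mulNr.
  under [X in _ -> _ <= X + _]eq_bigr do rewrite sumrN.
  rewrite sumrN sumrN; lra.
- move=> k hB hA b a hs hn; rewrite h4 ?oppr0 //; lia.
Qed.

Lemma part_ii (R : realType) (K L A B : finType) (M : K -> L -> A -> B -> R) n
  (mu : K -> R) (q : L -> R) (a0 : A) (b0 : B) (k0 : K) :
  (0 < n)%N -> is_distr q ->
  ((exists v, is_value1 M n mu q v /\ is_LPmin1 M n mu q v) /\
   (forall y w w0 wt, LP1_feasible M n mu q y w w0 wt ->
      is_LPmin1 M n mu q wt ->
      exists tau, security2 M n mu q tau /\
        forall l, q l != 0 -> forall b,
          tau l [::] [::] b = y l [::] [::] b / q l)).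
Proof.
move=> n0 hq.
have [[v [hv hLP]] hsec] := part_i (Mswap M) (fun k => - mu k) b0 a0 k0 n0 hq.
have LPmin : forall v, is_LPmax2 (Mswap M) n q (fun k => - mu k) v -> is_LPmin1 M n mu q (- v).
  move=> v' [[x [u [u0 hf]]] hb]; split.
    exists (swapS x), (fun k hA hB a b => - u k hB hA b a), (fun k => - u0 k).
    exact: LP_12 hf.
  move=> y w w0 wt hf1; have := hb _ _ _ _ (LP_21 hf1); rewrite lerNl.
  done.
split.
  exists (- v); split; [exact: value_12 | exact: LPmin].
move=> y w w0 wt hf [[y' [w' [w0' hf']]] hb].
have hmax : is_LPmax2 (Mswap M) n q (fun k => - mu k) (- wt).
  split; first by exists (swapS y), (fun k hB hA b a => - w k hA hB a b), (fun k => - w0 k); exact: LP_21.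
  move=> x u u0 ut hf2; have := hb _ _ _ _ (LP_12 hf2); rewrite lerNr.
  done.
have [sig [[hsig hsec'] hroot]] := hsec _ _ _ _ (LP_21 hf) hmax.
exists (swapS sig); split.
  split; first by move=> l hA hB; exact: hsig.
  move=> v' hv' p sigma hp hsigma.
  have := hsec' _ (value_21 hv') p (swapS sigma) hp (fun k hB hA => hsigma k hA hB).
  by rewrite pay_swap lerNl.
move=> l hl b; exact: hroot.
Qed.

Theorem theorem2 (R : realType) (K L A B : finType) (M : K -> L -> A -> B -> R)
  (T t : nat) (p_t : K -> R) (nu_t : L -> R) (mu_t : K -> R) (q_t : L -> R) :
  (0 < #|A|)%N -> (0 < #|B|)%N -> (1 <= t <= T)%N ->
  is_distr p_t -> is_distr q_t ->
  let n := (T + 1 - t)%N in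
  (* (i) type 2 dual game *)
  ((exists v, is_value2 M n p_t nu_t v /\ is_LPmax2 M n p_t nu_t v) /\
   (forall x u u0 ut, LP2_feasible M n p_t nu_t x u u0 ut ->
      is_LPmax2 M n p_t nu_t ut ->
      exists sigma, security1 M n p_t nu_t sigma /\
        forall k, p_t k != 0 -> forall a,
          sigma k [::] [::] a = x k [::] [::] a / p_t k)) /\
  (* (ii) type 1 dual game *)
  ((exists v, is_value1 M n mu_t q_t v /\ is_LPmin1 M n mu_t q_t v) /\
   (forall y w w0 wt, LP1_feasible M n mu_t q_t y w w0 wt ->
      is_LPmin1 M n mu_t q_t wt ->
      exists tau, security2 M n mu_t q_t tau /\
        forall l, q_t l != 0 -> forall b,
          tau l [::] [::] b = y l [::] [::] b / q_t l)).

Proof.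
move=> hA hB ht hp hq n.
have n0 : (0 < n)%N by rewrite /n; lia.
case/card_gt0P: hA => a0 _.
case/card_gt0P: hB => b0 _.
have [l0 _] : exists l0 : L, true.
  case: (pickP (fun _ : L => true)) => [l _|h]; first by exists l.
  have := hq.2; rewrite big_pred0 // => /eqP; by rewrite eq_sym oner_eq0.
have [k0 _] : exists k0 : K, true.
  case: (pickP (fun _ : K => true)) => [k _|h]; first by exists k.
  have := hp.2; rewrite big_pred0 // => /eqP; by rewrite eq_sym oner_eq0.
split.
  exact: (part_i M nu_t a0 b0 l0 n0 hp).
exact: (part_ii M mu_t a0 b0 k0 n0 hq).
Qed.
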